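(* Let $k\ge 2$ and $\ell\ge 0$ be constants. There is a deterministic $\mathsf{Online}$-$\mathsf{LOCAL}$ algorithm with locality $O(\log n)$ that properly colors every $n$-node connected graph in $\mathcal{L}_{k,\ell}$ using colors from $\{1,\dots,k+1\}$.
   Context: A graph is $k$-partite if it admits a proper coloring with $k$ colors. For a graph $G=(V,E)$, $U\subseteq V$ and an integer $T\ge 0$, $\mathcal{B}(U,T)$ denotes the set of nodes at distance at most $T$ from some node of $U$, and $G[U]$ denotes the induced subgraph. Locally inferable unique colorings: let $G$ be a $k$-partite graph and $\ell\ge0$ an integer. For a connected subgraph $G'=(V',E')$ of $G$, let $\mathcal{C}^*(G',\ell)$ be the set of all proper $k$-colorings (colors $\{1,\dots,k\}$) of $G[\mathcal{B}(V',\ell)]$, and $\mathcal{C}(G',\ell)$ the set of restrictions to $V'$ of colorings in $\mathcal{C}^*(G',\ell)$. Two $k$-colorings $c,c'$ are identical up to a permutation if $c'=\phi\circ c$ for some permutation $\phi$ of $\{1,\dots,k\}$. $\mathcal{L}_{k,\ell}$ is the class of $k$-partite graphs $G$ such that for every connected subgraph $G'$ of $G$, all colorings in $\mathcal{C}(G',\ell)$ are identical up to a permutation. The $\mathsf{Online}$-$\mathsf{LOCAL}$ model: an algorithm with locality $T=T(n)$ is deterministic and knows $n$. The adversary chooses an $n$-node input graph $G=(V,E)$ from the input family, assigns distinct identifiers from $\{1,\dots,\mathrm{poly}(n)\}$ to its nodes, and chooses an ordering $\sigma=(v_1,\dots,v_n)$ of $V$. For $i=1,\dots,n$, when $v_i$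 is presented, the algorithm must irrevocably assign an output (here a color) to $v_i$ as a function of the sequence $(v_1,\dots,v_i)$ and the induced subgraph $G_i=G\big[\bigcup_{j\le i}\mathcal{B}(v_j,T)\big]$ (with identifiers); thus the algorithm has global memory of everything seen so far. The algorithm solves a coloring problem on an input family if for every choice of the adversary the final coloring is proper and uses only the allowed colors. The locality of a problem is the minimum locality of an algorithm solving it. *)

(* Defs.v *)
From mathcomp Require Import all_boot all_fingroup.
Set Implicit Arguments. Unset Strict Implicit. Unset Printing Implicit Defensive.

Definition sgraph (V : finType) (e : rel V) : Prop :=
  symmetric e /\ irreflexive e.

Definition connected_graph (V : finType) (e : rel V) : Prop :=
  forall x y : V, connect e x y.

Fixpoint nball (V : finType) (e : rel V) (t : nat) (u : V) : {set V} :=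
  match t with
  | 0 => [set u]
  | t'.+1 => nball e t' u :|: [set y | [exists x in nball e t' u, e x y]]
  end.

Definition ball (V : finType) (e : rel V) (t : nat) (U : {set V}) : {set V} :=
  \bigcup_(u in U) nball e t u.

Definition proper_on (V : finType) (C : eqType) (e : rel V) (U : {set V})
    (c : V -> C) : Prop :=
  forall x y, x \in U -> y \in U -> e x y -> c x != c y.

Definition k_partite (V : finType) (e : rel V) (k : nat) : Prop :=
  exists c : V -> 'I_k, proper_on e [set: V] c.

Definition connected_subgraph (V : finType) (e : rel V) (V' : {set V})
    (E' : rel V) : Prop :=
  [/\ forall x y, E' x y -> [&& x \in V', y \in V' & e x y],
      symmetric E' &
      forall x y, x \in V' -> y \in V' -> connect E' x y].

(* The class L_{k,l} of locally inferable unique colorings.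
   Colors {1..k} are represented by 'I_k; a coloring of G[B(V',l)] is any
   c : V -> 'I_k proper on B(V',l) (values outside are irrelevant). *)
Definition L_class (V : finType) (e : rel V) (k l : nat) : Prop :=
  k_partite e k /\
  forall (V' : {set V}) (E' : rel V), connected_subgraph e V' E' ->
  forall c c' : V -> 'I_k,
    proper_on e (ball e l V') c -> proper_on e (ball e l V') c' ->
    exists phi : {perm 'I_k}, forall x, x \in V' -> c' x = phi (c x).

(* An Online-LOCAL algorithm: given n, the identifiers of the presented
   nodes (v_1, ..., v_i) in order, and the visible induced subgraph
   G_i = G[B({v_1..v_i}, T)] described by its set of identifiers and its
   edge relation on identifiers, it outputs the color of v_i. *)
Definition online_alg := nat -> seq nat -> (nat -> bool) -> (nat -> nat -> bool) -> nat.

Definition online_output (A : online_alg) (T : nat -> nat) (V : finType)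
    (e : rel V) (id : V -> nat) (sigma : seq V) (i : nat) : nat :=
  let n := #|V| in
  let p := take i sigma in
  let W := ball e (T n) [set x in p] in
  A n (map id p)
    (fun a => [exists x in W, id x == a])
    (fun a b => [exists x in W, exists y in W, [&& id x == a, id y == b & e x y]]).

(* color assigned to v, which is presented at step (index v sigma).+1 *)
Definition online_coloring (A : online_alg) (T : nat -> nat) (V : finType)
    (e : rel V) (id : V -> nat) (sigma : seq V) (v : V) : nat :=
  online_output A T e id sigma (index v sigma).+1.

Definition solves_online (A : online_alg) (T : nat -> nat) (k l d : nat) : Prop :=
  forall (V : finType) (e : rel V) (id : V -> nat) (sigma : seq V),
    sgraph e -> connected_graph e -> L_class e k l ->
    injective id -> (forall x, 1 <= id x <= #|V| ^ d) ->
    perm_eq sigma (enum V) ->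
    (forall v, 1 <= online_coloring A T e id sigma v <= k.+1) /\
    (forall u v, e u v ->
       online_coloring A T e id sigma u != online_coloring A T e id sigma v).

Definition is_O_log (T : nat -> nat) : Prop :=
  exists C N : nat, forall n, N <= n -> T n <= C * trunc_log 2 n.

(* Main.v *)
Require Import Defs.
From mathcomp Require Import all_boot all_fingroup zify.
From Stdlib Require Import ClassicalEpsilon PropExtensionality FunctionalExtensionality.
Set Implicit Arguments. Unset Strict Implicit. Unset Printing Implicit Defensive.

Module B1.

Section Basics.
Variables (V : finType) (e : rel V).

Lemma nball0 t u : u \in nball e t u.
Proof. elim: t => [|t IH] /=; first by rewrite inE. by rewrite inE IH. Qed.

Lemma nball_S t u x : x \in nball e t u -> x \in nball e t.+1 u.
Proof. by move=> H /=; rewrite inE H. Qed.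

Lemma nball_mono t t' u x : t <= t' -> x \in nball e t u -> x \in nball e t' u.
Proof.
move=> /subnKC <-; elim: (t' - t) => [|m IH] Hx; first by rewrite addn0.
by rewrite addnS; apply: nball_S; apply: IH.
Qed.

Lemma nball_step t u x y : x \in nball e t u -> e x y -> y \in nball e t.+1 u.
Proof.
move=> Hx Hxy /=; rewrite inE; apply/orP; right; rewrite inE.
by apply/existsP; exists x; rewrite Hx.
Qed.

Lemma nballSP t u y : y \in nball e t.+1 u ->
  y \in nball e t u \/ exists2 x, x \in nball e t u & e x y.
Proof.
rewrite /= inE => /orP [H|]; first by left.
by rewrite inE => /existsP [x /andP [Hx Hxy]]; right; exists x.
Qed.

Lemma nball_tri s t u x y : x \in nball e s u -> y \in nball e t x ->
  y \in nball e (s + t) u.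
Proof.
move=> Hx; elim: t y => [|t IH] y.
  by rewrite /= inE => /eqP ->; rewrite addn0.
move/nballSP => [H|[z Hz Hzy]]; rewrite addnS.
  by apply: nball_S; apply: IH.
by apply: (nball_step (IH _ Hz)).
Qed.

Lemma ballP t (A : {set V}) y :
  reflect (exists2 u, u \in A & y \in nball e t u) (y \in ball e t A).
Proof. by apply: (iffP bigcupP) => [[u Hu Hy]|[u Hu Hy]]; exists u. Qed.

Lemma ball_mono t t' (A B : {set V}) y : t <= t' -> A \subset B ->
  y \in ball e t A -> y \in ball e t' B.
Proof.
move=> Ht /subsetP AB /ballP [u Hu Hy]; apply/ballP; exists u; first exact: AB.
exact: nball_mono Ht Hy.
Qed.

Lemma ball_sub t (A : {set V}) : A \subset ball e t A.
Proof. by apply/subsetP => u Hu; apply/ballP; exists u => //; apply: nball0. Qed.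

Lemma ball_step t (A : {set V}) x y : x \in ball e t A -> e x y -> y \in ball e t.+1 A.
Proof. by move=> /ballP [u Hu Hx] Hxy; apply/ballP; exists u => //; apply: nball_step Hx Hxy. Qed.

Lemma ball_tri s t (A : {set V}) x y : x \in ball e s A -> y \in nball e t x ->
  y \in ball e (s + t) A.
Proof. by move=> /ballP [u Hu Hx] Hy; apply/ballP; exists u => //; apply: nball_tri Hx Hy. Qed.

Definition rres (D : {set V}) : rel V := fun a b => [&& a \in D, b \in D & e a b].

Lemma nball_connect (D : {set V}) t u : nball e t u \subset D ->
  forall y, y \in nball e t u -> connect (rres D) u y.
Proof.
elim: t => [|t IH] sub y.
  by rewrite /= inE => /eqP ->; apply: connect0.
have sub' : nball e t u \subset D.
  by apply/subsetP => z Hz; apply: (subsetP sub); apply: nball_S.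
move/nballSP => [H|[z Hz Hzy]]; first exact: IH.
apply: connect_trans (IH sub' _ Hz) _; apply: connect1.
rewrite /rres Hzy (subsetP sub' _ Hz) andbT /=.
by apply: (subsetP sub); apply: nball_step Hz Hzy.
Qed.

(* distance from a set, capped *)
Definition dset (N : nat) (A : {set V}) (y : V) : nat :=
  find (fun t => y \in ball e t A) (iota 0 N).

Lemma dset_le N A y t : t < N -> y \in ball e t A -> dset N A y <= t.
Proof.
move=> HtN Hy; rewrite /dset.
have Hs : t < size (iota 0 N) by rewrite size_iota.
have := (@before_find _ 0 (fun t => y \in ball e t A) (iota 0 N) t).
case: ltnP => // Hlt /(_ isT); rewrite nth_iota // add0n Hy //.
Qed.

Lemma dset_in N A y t : t < N -> y \in ball e t A -> y \in ball e (dset N A y) A.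
Proof.
move=> HtN Hy.
have Hhas : has (fun t => y \in ball e t A) (iota 0 N).
  by apply/hasP; exists t => //; rewrite mem_iota.
have := nth_find 0 Hhas; rewrite /dset nth_iota ?add0n //.
by move: Hhas; rewrite has_find size_iota.
Qed.

Lemma dset_gt N A y t : t < N -> y \in ball e (dset N A y) A ->
  y \notin ball e t A -> t < dset N A y.
Proof.
move=> HtN Hd Hn; rewrite ltnNge; apply/negP => Hle.
by move: Hn; rewrite (ball_mono (A:=A) Hle (subxx _) Hd).
Qed.

End Basics.

End B1.
Import B1.
Module B2.

Section Chain.
Variable k : nat.

Definition valid_chain (F : nat -> 'I_k -> nat) (s0 s1 : {perm 'I_k}) (M : nat) :=
 [/\ forall a, F 0 a = (s0 a).+1, forall t a, M <= t -> F t a = (s1 a).+1,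
     forall t a, 0 < F t a <= k.+1, forall t, injective (F t)
   & forall t a b, a != b -> F t a != F t.+1 b].

Definition upd (H : 'I_k -> nat) x c := fun a => if a == x then c else H a.

Lemma upd_inj H x c : injective H -> (forall a, H a != c) -> injective (upd H x c).
Proof.
move=> Hi Hc a b; rewrite /upd.
case: eqP => [->|_]; case: eqP => [->|_] //.
- by move=> E; move: (Hc b); rewrite -E eqxx.
- by move=> E; move: (Hc a); rewrite E eqxx.
- exact: Hi.
Qed.

Lemma upd_valid H x c : injective H -> (forall a, H a != c) ->
  forall a b, a != b -> H a != upd H x c b.
Proof.
move=> Hi Hc a b ab; rewrite /upd; case: (b =P x) => _; first exact: Hc.
by apply/eqP => /Hi E; move: ab; rewrite E eqxx.
Qed.

Lemma chain_mono F s0 s1 M M' : M <= M' -> valid_chain F s0 s1 M -> valid_chain F s0 s1 M'.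
Proof.
move=> MM [H0 H1 H2 H3 H4]; split=> // t a Ht; apply: H1; exact: leq_trans MM Ht.
Qed.

Lemma chain_m (m : nat) : forall s0 s1 : {perm 'I_k},
  #|[set a | s0 a != s1 a]| <= m -> exists F, valid_chain F s0 s1 (3 * m).
Proof.
elim: m => [|m IH] s0 s1 Hm.
  have E : forall a, s0 a = s1 a.
    move=> a; apply/eqP; apply: negbNE; apply/negP => Ha.
    have : a \in [set a | s0 a != s1 a] by rewrite inE.
    by move: Hm; rewrite leqn0 cards_eq0 => /eqP ->; rewrite inE.
  exists (fun _ a => (s0 a).+1); split=> //.
  - by move=> t a _; rewrite E.
  - by move=> t a; rewrite /= ltnS (ltnW (ltn_ord _)).
  - move=> t a b /= [] Eab; exact: (perm_inj (val_inj Eab)).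
  - move=> t a b ab; rewrite eqSS; apply/eqP => Eab; move: ab.
    by rewrite (perm_inj (val_inj Eab)) eqxx.
case: (set_0Vmem [set a | s0 a != s1 a]) => [E0|[i]].
  have E : forall a, s0 a = s1 a.
    move=> a; apply/eqP; apply: negbNE; apply/negP => Ha.
    have : a \in [set a | s0 a != s1 a] by rewrite inE.
    by rewrite E0 inE.
  exists (fun _ a => (s0 a).+1); split=> //.
  - by move=> t a _; rewrite E.
  - by move=> t a; rewrite /= ltnS (ltnW (ltn_ord _)).
  - move=> t a b /= [] Eab; exact: (perm_inj (val_inj Eab)).
  - move=> t a b ab; rewrite eqSS; apply/eqP => Eab; move: ab.
    by rewrite (perm_inj (val_inj Eab)) eqxx.
rewrite inE => Hi.
pose j := (s0^-1)%g (s1 i).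
have s0j : s0 j = s1 i by rewrite /j permKV.
have ij : i != j by apply/eqP => E; move: Hi; rewrite -s0j E eqxx.
pose s' := (tperm i j * s0)%g.
have s'E : forall a, s' a = s0 (tperm i j a) by move=> a; rewrite permM.
have Hsub : [set a | s' a != s1 a] \subset [set a | s0 a != s1 a] :\ i.
  apply/subsetP => a; rewrite !inE s'E.
  have [->|ai] := eqVneq a i; first by rewrite tpermL s0j eqxx.
  have [->|aj] := eqVneq a j.
    rewrite tpermR => _; rewrite /= s0j; apply/negP => /eqP /perm_inj E.
    by move: ij; rewrite E eqxx.
  by rewrite tpermD // 1?eq_sym // ai.
have Hm' : #|[set a | s' a != s1 a]| <= m.
  apply: leq_trans (subset_leq_card Hsub) _.
  rewrite (cardsD1 i) inE Hi /= add1n ltnS in Hm; exact: Hm.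
have [G [G0 G1 G2 G3 G4]] := IH _ _ Hm'.
pose f0 := fun a => (s0 a).+1.
pose f1 := upd f0 i k.+1.
pose f2 := upd f1 j (s0 i).+1.
pose f3 := upd f2 i (s0 j).+1.
have i0 : injective f0 by move=> a b [] Eab; exact: (perm_inj (val_inj Eab)).
have c1 : forall a, f0 a != k.+1 by move=> a; rewrite /f0 eqSS neq_ltn ltn_ord.
have i1 : injective f1 by apply: upd_inj.
have c2 : forall a, f1 a != (s0 i).+1.
  move=> a; rewrite /f1 /upd; case: (a =P i) => [_|/eqP ai].
    by rewrite eqSS neq_ltn ltn_ord orbT.
  rewrite /f0 eqSS; apply/eqP => /val_inj /perm_inj E; by move: ai; rewrite E eqxx.
have i2 : injective f2 by apply: upd_inj.
have c3 : forall a, f2 a != (s0 j).+1.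
  move=> a; rewrite /f2 /f1 /upd; case: (a =P j) => [_|/eqP aj].
    rewrite eqSS; apply/eqP => /val_inj /perm_inj E; by move: ij; rewrite E eqxx.
  case: (a =P i) => [_|/eqP ai]; first by rewrite eqSS neq_ltn ltn_ord orbT.
  rewrite /f0 eqSS; apply/eqP => /val_inj /perm_inj E; by move: aj; rewrite E eqxx.
have f3E : forall a, f3 a = G 0 a.
  move=> a; rewrite G0 s'E /f3 /f2 /f1 /upd /f0.
  have [->|ai] := eqVneq a i; first by rewrite tpermL.
  have [->|aj] := eqVneq a j; first by rewrite tpermR.
  by rewrite tpermD // eq_sym.
exists (fun t => if t == 0 then f0 else if t == 1 then f1 else if t == 2 then f2
                 else G (t - 3)); split.
- by [].
- move=> t a Ht; have Ht3 : 3 <= t by apply: leq_trans Ht; rewrite mulnS leq_addr.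
  rewrite !ifN_eq; try by apply/eqP => E; move: Ht3; rewrite E.
  by apply: G1; rewrite mulnS in Ht; lia.
- have r0 : forall a, 0 < f0 a <= k.+1.
    by move=> a; rewrite /f0 /= ltnS (ltnW (ltn_ord _)).
  have r1 : forall a, 0 < f1 a <= k.+1.
    move=> a; rewrite /f1 /upd; case: ifP => _; [by rewrite /= ltnSn | exact: r0].
  have r2 : forall a, 0 < f2 a <= k.+1.
    move=> a; rewrite /f2 /upd; case: ifP => _; last exact: r1.
    by rewrite /= ltnS (ltnW (ltn_ord _)).
  case=> [|[|[|t]]] a; rewrite /=; [exact: r0|exact: r1|exact: r2|exact: G2].
- case=> [|[|[|t]]] //=; rewrite subSS subSS subSS subn0; exact: G3.
- move=> [|[|[|t]]] a b ab /=.
  + exact: upd_valid.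
  + exact: upd_valid.
  + by rewrite -f3E; apply: upd_valid.
  + rewrite !subSS subn0; exact: G4.
Qed.

Lemma chain_exists (s0 s1 : {perm 'I_k}) : exists F, valid_chain F s0 s1 (3 * k).
Proof.
have Hc : #|[set a | s0 a != s1 a]| <= k.
  by apply: leq_trans (max_card _) _; rewrite card_ord.
exact: chain_m Hc.
Qed.

End Chain.

End B2.
Import B2.
Module B3.

Section InvDef.
Variables (k l n : nat).
Definition lg := trunc_log 2.
Definition Lc := 3 * k.
Definition Sf := Lc * lg n + 2.
Definition Tf := Sf + l.
Definition hf s := Lc * (lg n - lg s) + 1.

Variables (U : finType) (e : rel U).
Definition core (P : seq U) := ball e Sf [set x in P].
Definition vis (P : seq U) := ball e Tf [set x in P].
Definition grp (P : seq U) x y := connect (rres e (core P)) x y.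
Definition grpset (P : seq U) y := [set u in P | grp P u y].
Definition cnt (P : seq U) y := #|grpset P y|.
Definition clean (P : seq U) y := y \notin ball e (Sf - hf (cnt P y)) (grpset P y).
Definition Inv (P : seq U) (o : seq nat) : Prop := exists f : U -> nat,
  [/\ map f P = o,
      forall x, x \in core P -> 0 < f x <= k.+1,
      forall x y, x \in core P -> y \in core P -> e x y -> f x != f y &
      forall x, x \in core P -> exists (s : {perm 'I_k}) (chi : U -> 'I_k),
         proper_on e (vis P) chi /\
         forall y, grp P x y -> clean P y -> f y = (s (chi y)).+1 ].
End InvDef.

Section Graph.
Variables (V : finType) (e : rel V).
Hypothesis esym : symmetric e.

Lemma rres_sym (D : {set V}) : symmetric (rres e D).
Proof. by move=> a b; rewrite /rres esym andbCA andbA. Qed.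

Lemma rres_connect_sym (D : {set V}) : connect_sym (rres e D).
Proof. exact: sym_connect_sym (rres_sym D). Qed.

Lemma rres_in (D : {set V}) x y : connect (rres e D) x y -> x = y \/ y \in D.
Proof.
move/connectP => [p]; elim: p x => [|z p IH] x /=; first by move=> _ ->; left.
move=> /andP [/and3P [_ zD _] Hp] Hy; right.
by case: (IH z Hp Hy) => [<-|].
Qed.

Lemma rres_sub (D D' : {set V}) x y : D \subset D' -> connect (rres e D) x y -> connect (rres e D') x y.
Proof.
move=> /subsetP DD; apply: connect_sub => a b /and3P [aD bD ab].
by apply: connect1; rewrite /rres ab !DD.
Qed.

Lemma conn_restrict (D : {set V}) x a b : connect (rres e D) x a -> connect (rres e D) a b ->
  connect (rres e [set y | connect (rres e D) x y]) a b.
Proof.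
move=> xa /connectP [p]; elim: p a xa => [|z p IH] a xa /=; first by move=> _ ->.
move=> /andP [az Hp] Hb.
have xz : connect (rres e D) x z by apply: connect_trans xa (connect1 az).
apply: connect_trans (IH z xz Hp Hb); apply: connect1.
by rewrite /rres !inE xa xz; case/and3P: az.
Qed.

Variables (k l n : nat).
Local Notation core := (core k n e).
Local Notation grp := (grp k n e).

Lemma core_grp (P : seq V) x : x \in core P ->
  exists2 u, u \in P & grp P u x /\ x \in nball e (Sf k n) u.
Proof.
move=> /ballP [u]; rewrite inE => uP Hx; exists u => //; split => //.
apply: nball_connect Hx; apply/subsetP => z Hz; apply/ballP; exists u => //.
by rewrite inE.
Qed.

Lemma grp_core (P : seq V) x y : x \in core P -> grp P x y -> y \in core P.
Proof. by move=> Hx /rres_in [<-|]. Qed.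

Lemma grp_sym (P : seq V) x y : grp P x y = grp P y x.
Proof. exact: rres_connect_sym. Qed.

Lemma grp_trans (P : seq V) x y z : grp P x y -> grp P y z -> grp P x z.
Proof. exact: connect_trans. Qed.

Lemma grpset_eq (P : seq V) x y : grp P x y -> grpset k n e P x = grpset k n e P y.
Proof.
move=> xy; apply/setP => u; rewrite !inE; case: (u \in P) => //=.
apply/idP/idP => H; first exact: grp_trans H xy.
by apply: grp_trans H _; rewrite grp_sym.
Qed.
End Graph.

Section Frame.
Variables (V : finType) (e : rel V) (k l n : nat).
Hypothesis esym : symmetric e.
Variable cs : V -> 'I_k.
Hypothesis cs_proper : proper_on e [set: V] cs.
Hypothesis Luniq : forall (V' : {set V}) (E' : rel V), connected_subgraph e V' E' ->
  forall c c' : V -> 'I_k,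
    proper_on e (ball e l V') c -> proper_on e (ball e l V') c' ->
    exists phi : {perm 'I_k}, forall x, x \in V' -> c' x = phi (c x).

Lemma strong_frame (P : seq V) (f : V -> nat) x :
  x \in core k n e P ->
  (exists (s : {perm 'I_k}) (chi : V -> 'I_k),
         proper_on e (vis k l n e P) chi /\
         forall y, grp k n e P x y -> clean k n e P y -> f y = (s (chi y)).+1) ->
  exists s : {perm 'I_k}, forall y, grp k n e P x y -> clean k n e P y ->
     f y = (s (cs y)).+1.
Proof.
move=> xC [s [chi [Hchi Hf]]].
pose V' := [set y | grp k n e P x y].
have Hcs : connected_subgraph e V' (rres e V').
  split.
  - by move=> a b.
  - exact: rres_sym.
  - move=> a b; rewrite !inE => xa xb.
    have ab : grp k n e P a b by apply: grp_trans _ xb; rewrite grp_sym.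
    exact: conn_restrict xa ab.
have Hball : ball e l V' \subset vis k l n e P.
  apply/subsetP => y /ballP [z]; rewrite inE => xz Hy.
  have zC := grp_core xC xz.
  move: zC => /ballP [u uP Hz]; apply/ballP; exists u => //.
  exact: nball_tri Hz Hy.
have p1 : proper_on e (ball e l V') chi.
  by move=> a b Ha Hb; apply: Hchi; apply: (subsetP Hball).
have p2 : proper_on e (ball e l V') cs.
  by move=> a b _ _; apply: cs_proper; rewrite inE.
have [phi Hphi] := Luniq Hcs p1 p2.
exists (phi^-1 * s)%g => y xy Hcl; rewrite Hf // permM.
by rewrite Hphi ?inE // permK.
Qed.
End Frame.

End B3.
Import B3.
Module B4.

Lemma ar_idx a b c : c < a -> c < b -> b <= a.+1 -> a <= b.+1 ->
  (a - c).-1 = (b - c).-1 \/ (b - c).-1 = ((a - c).-1).+1 \/ (a - c).-1 = ((b - c).-1).+1.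
Proof. lia. Qed.

Lemma ar_eq a b c : b <= c -> c < a -> a <= b.+1 -> a = c.+1.
Proof. lia. Qed.

Section Step.
Variables (V : finType) (e : rel V) (k l : nat).
Let n := #|V|.
Hypothesis esym : symmetric e.
Variable cs : V -> 'I_k.
Hypothesis cs_proper : proper_on e [set: V] cs.
Variable ch : {perm 'I_k} -> {perm 'I_k} -> nat -> 'I_k -> nat.
Hypothesis Hch : forall s0 s1, valid_chain (ch s0 s1) s0 s1 (3 * k).
Variables (P : seq V) (v : V) (f : V -> nat) (sig : V -> {perm 'I_k}).
Hypothesis vP : v \notin P.
Hypothesis Puniq : uniq P.
Local Notation S := (Sf k n).
Local Notation C := (core k n e P).
Local Notation grp := (grp k n e).
Local Notation cnt := (cnt k n e).
Local Notation grpset := (grpset k n e).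
Local Notation clean := (clean k n e).
Let P' := rcons P v.
Local Notation C' := (core k n e P').
Hypothesis Hrange : forall x, x \in C -> 0 < f x <= k.+1.
Hypothesis Hprop : forall x y, x \in C -> y \in C -> e x y -> f x != f y.
Hypothesis Hsig : forall x, x \in C -> forall y, grp P x y -> clean P y ->
  f y = (sig x (cs y)).+1.

Lemma coreP' y : (y \in C') = (y \in C) || (y \in nball e S v).
Proof.
apply/ballP/orP => [[u]|[/ballP [u uP Hy]|Hy]].
- rewrite inE mem_rcons inE => /orP [/eqP ->|uP Hy]; first by move=> Hy; right.
  by left; apply/ballP; exists u; rewrite ?inE.
- by exists u; rewrite // inE mem_rcons inE; rewrite inE in uP; rewrite uP orbT.
- by exists v; rewrite // inE mem_rcons inE eqxx.
Qed.

Lemma C_C' y : y \in C -> y \in C'.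
Proof. by rewrite coreP' => ->. Qed.

Lemma grpPP' x y : grp P x y -> grp P' x y.
Proof. apply: rres_sub; apply/subsetP => z; exact: C_C'. Qed.

Let K' := [set y | grp P' v y].

Lemma ballv_K' y : y \in nball e S v -> y \in K'.
Proof.
move=> Hy; rewrite inE; apply: nball_connect Hy.
by apply/subsetP => z Hz; rewrite coreP' Hz orbT.
Qed.

Lemma K'_grp x y : x \in K' -> grp P' x y -> y \in K'.
Proof. by rewrite !inE => vx xy; apply: connect_trans vx xy. Qed.

Lemma notK'_grp x y : x \notin K' -> grp P' x y -> y \notin K'.
Proof.
move=> Hx xy; apply/negP => Hy; move: Hx; rewrite (K'_grp Hy) //.
by rewrite /grp rres_connect_sym.
Qed.

Lemma notK'_C x : x \in C' -> x \notin K' -> x \in C.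
Proof.
rewrite coreP' => /orP [//|/ballv_K' H]; by rewrite H.
Qed.

Lemma notK'_grpP x y : x \notin K' -> grp P' x y -> grp P x y.
Proof.
move=> Hx /connectP [p]; elim: p x Hx => [|z p IH] x Hx /=; first by move=> _ ->; apply: connect0.
move=> /andP [xz Hp] Hy.
have xz' : grp P' x z by apply: connect1.
have Hz := notK'_grp Hx xz'.
apply: connect_trans (IH z Hz Hp Hy); apply: connect1.
case/and3P: xz => xC zC xz; by rewrite /rres (notK'_C xC Hx) (notK'_C zC Hz) xz.
Qed.

Lemma notK'_grpset y : y \notin K' -> grpset P' y = grpset P y.
Proof.
move=> Hy; apply/setP => u; rewrite !inE mem_rcons inE.
have [->|uv] := eqVneq u v.
  rewrite (negbTE vP) /=; apply/negP => vy; move: Hy; by rewrite inE vy.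
rewrite /=; case: (u \in P) => //=; apply/idP/idP => H.
  rewrite grp_sym //; apply: notK'_grpP Hy _; by rewrite grp_sym.
exact: grpPP'.
Qed.

Lemma notK'_clean y : y \notin K' -> clean P' y = clean P y.
Proof. by move=> Hy; rewrite /clean/B3.cnt notK'_grpset. Qed.

Lemma C_K'_grp x y : x \in K' -> grp P x y -> y \in K'.
Proof. by move=> Hx /grpPP'; apply: K'_grp. Qed.

Definition inPK u := (u \in P) && (u \in K').

Definition wopt := if [pick u | inPK u] is Some u0 then
  Some (arg_max u0 inPK (cnt P)) else None.

Lemma C_K'_u x : x \in C -> x \in K' -> exists2 u, inPK u & grp P u x.
Proof.
move=> /core_grp [u uP [ux _]] Hx; exists u => //; rewrite /inPK uP /=.
apply: (C_K'_grp Hx); by rewrite grp_sym.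
Qed.

Lemma winnerP x : x \in C -> x \in K' -> exists w, [/\ wopt = Some w, inPK w &
  forall u, inPK u -> cnt P u <= cnt P w].
Proof.
move=> xC xK; have [u Hu ux] := C_K'_u xC xK.
rewrite /wopt; case: pickP => [u0 Hu0|/(_ u)]; last by rewrite Hu.
case: arg_maxnP => // w Hw Hmax; exists w; split => //.
Qed.


Definition rep x := nth v P (find (fun u => grp P u x) P).

Lemma rep_spec x : x \in C -> rep x \in P /\ grp P (rep x) x.
Proof.
move=> /core_grp [u uP [ux _]].
have Hh : has (fun u => grp P u x) P by apply/hasP; exists u.
split; first by rewrite /rep mem_nth // -has_find.
exact: (nth_find v Hh).
Qed.

Lemma rep_eq x y : grp P x y -> rep x = rep y.
Proof.
move=> xy; rewrite /rep; congr nth; apply: eq_find => u /=.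
apply/idP/idP => H; first exact: grp_trans H xy.
by apply: grp_trans H _; rewrite grp_sym.
Qed.

Lemma P_C u : u \in P -> u \in C.
Proof. by move=> uP; apply: (subsetP (ball_sub _ _ _)); rewrite inE. Qed.

Definition frame x := sig (rep x).

Lemma frame_spec x : x \in C -> forall y, grp P x y -> clean P y ->
  f y = (frame x (cs y)).+1.
Proof.
move=> xC y xy Hy; have [rP rx] := rep_spec xC.
apply: Hsig => //; first exact: P_C.
exact: grp_trans rx xy.
Qed.

Definition sw := if wopt is Some w then frame w else 1%g.
Definition isW x := if wopt is Some w then grp P w x else false.
Let N := S.+2.
Definition t0 y := S - hf k n (cnt P y).
Definition dd y := dset e N (grpset P y) y.
Definition gidx y := (dd y - t0 y).-1.

Definition f' y := if y \in K' then
   (if y \in C then (if isW y then f y else if clean P y then ch (frame y) sw (gidx y) (cs y) else f y)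
    else (sw (cs y)).+1)
  else f y.

Lemma cnt_pos x : x \in C -> 0 < cnt P x.
Proof.
move=> xC; have [rP rx] := rep_spec xC; rewrite /B3.cnt card_gt0.
by apply/set0Pn; exists (rep x); rewrite inE rP.
Qed.

Lemma grpset_sub x : grpset P x \subset grpset P' x.
Proof.
apply/subsetP => u; rewrite !inE mem_rcons inE => /andP [-> /grpPP' ->].
by rewrite orbT.
Qed.

Lemma cnt_le x : cnt P x <= cnt P' x.
Proof. exact: subset_leq_card (grpset_sub x). Qed.

Lemma cnt'_le x : cnt P' x <= n.
Proof. exact: max_card. Qed.



Lemma hf_mono s s' : s <= s' -> hf k n s' <= hf k n s.
Proof.
move=> ss; rewrite /hf leq_add2r leq_mul2l; apply/orP; right.
by apply: leq_sub2l; apply: leq_trunc_log.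
Qed.

Lemma hf_lt s : hf k n s < S.
Proof.
rewrite /hf /Sf addn2 ltnS addn1 ltnS leq_mul2l; apply/orP; right; exact: leq_subr.
Qed.

Lemma hf_loser s s' : 0 < s -> s + s < s' -> s' <= n ->
  Lc k + 1 <= hf k n s /\ hf k n s' + Lc k <= hf k n s.
Proof.
move=> s0 ss' s'n.
have H1 : (lg s).+1 <= lg s'.
  rewrite /lg -trunc_logMp //; apply: leq_trunc_log; rewrite mul2n -addnn; exact: ltnW.
have H2 : lg s' <= lg n by apply: leq_trunc_log.
have H3 : (lg n - lg s').+1 <= lg n - lg s by lia.
rewrite /hf; split.
  rewrite leq_add2r; apply: leq_trans (leq_mul (leqnn _) H3).
  by rewrite mulnS leq_addr.
by rewrite addnAC leq_add2r addnC -mulnS leq_mul2l H3 orbT.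
Qed.

Lemma loser_cnt x : x \in C -> x \in K' -> ~~ isW x -> cnt P x + cnt P x < cnt P' x.
Proof.
move=> xC xK nW; have [w [Hw Hin Hmax]] := winnerP xC xK.
move: Hin => /andP [wP wK]; move: nW; rewrite /isW Hw => nwx.
have [u Hu ux] := C_K'_u xC xK.
have cuw : cnt P x <= cnt P w.
  by rewrite /B3.cnt -(grpset_eq _ ux) //; apply: Hmax.
pose A := grpset P x; pose B := grpset P w.
have dAB : A :&: B = set0.
  apply/setP => z; rewrite !inE; apply/negP => /andP [/andP [_ zx] /andP [_ zw]].
  by move: nwx; rewrite (grp_trans (y:=z)) // grp_sym.
have vAB : v \notin A :|: B by rewrite !inE (negbTE vP).
have sub : v |: (A :|: B) \subset grpset P' x.
  apply/subsetP => z; rewrite !inE => /orP [/eqP ->|/orP [/andP [zP zx]|/andP [zP zw]]].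
  - by rewrite mem_rcons inE eqxx /=; move: xK; rewrite inE.
  - by rewrite mem_rcons inE zP orbT /= grpPP'.
  - rewrite mem_rcons inE zP orbT /=; apply: grp_trans (grpPP' zw) _.
    apply: (grp_trans (y := v)); last by move: xK; rewrite inE.
    by rewrite grp_sym //; move: wK; rewrite inE.
have := subset_leq_card sub; rewrite cardsU1 vAB cardsU.
rewrite dAB cards0.
rewrite subn0 add1n /B3.cnt -/A -/B => H; apply: leq_trans H.
by rewrite ltnS leq_add2l.
Qed.


Lemma chain_ne s0 s1 t t' a b : a != b -> (t = t' \/ t' = t.+1 \/ t = t'.+1) ->
  ch s0 s1 t a != ch s0 s1 t' b.
Proof.
have [_ _ _ Hi Hv] := Hch s0 s1.
move=> ab [<-|[->|->]].
- by apply/eqP => /Hi E; move: ab; rewrite E eqxx.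
- exact: Hv.
- by rewrite eq_sym; apply: Hv; rewrite eq_sym.
Qed.

Lemma C_ballS x : x \in C -> x \in ball e S (grpset P x).
Proof.
move=> /core_grp [u uP [ux Hx]]; apply/ballP; exists u => //.
by rewrite inE uP.
Qed.

Lemma dd_le x : x \in C -> dd x <= S.
Proof. by move=> xC; apply: dset_le => //; apply: C_ballS. Qed.

Lemma dd_in x : x \in C -> x \in ball e (dd x) (grpset P x).
Proof. by move=> xC; apply: (@dset_in _ _ _ _ _ S) => //; apply: C_ballS. Qed.

Lemma clean_dd x : x \in C -> clean P x = (t0 x < dd x).
Proof.
move=> xC; rewrite /clean; apply/idP/idP => H.
  apply: dset_gt (dd_in xC) H; rewrite /t0; lia.
apply/negP => Hb; have := dset_le (N := N) _ Hb.
rewrite -/(dd x) => /(_ _) Hle; have : t0 x < N by rewrite /t0; lia.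
by move/Hle; rewrite leqNgt H.
Qed.

Lemma dd_lip x y : x \in C -> grp P x y -> e x y -> dd y <= (dd x).+1.
Proof.
move=> xC xy exy; rewrite /dd -(grpset_eq _ xy) //.
apply: dset_le; first by have := dd_le xC; rewrite /dd /N; lia.
exact: ball_step (dd_in xC) exy.
Qed.

Lemma f'_loser x : x \in C -> x \in K' -> ~~ isW x ->
  f' x = if t0 x < dd x then ch (frame x) sw (dd x - t0 x).-1 (cs x) else f x.
Proof. by move=> xC xK nW; rewrite /f' xK xC (negbTE nW) clean_dd. Qed.

Lemma f'_winner x : x \in C -> x \in K' -> isW x -> f' x = f x.
Proof. by move=> xC xK W; rewrite /f' xK xC W. Qed.

Lemma f'_new x : x \in K' -> x \notin C -> f' x = (sw (cs x)).+1.
Proof. by move=> xK xC; rewrite /f' xK (negbTE xC). Qed.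

Lemma f'_out x : x \notin K' -> f' x = f x.
Proof. by move=> xK; rewrite /f' (negbTE xK). Qed.

Lemma same_grp x y : grp P x y ->
  [/\ isW x = isW y, frame x = frame y, t0 x = t0 y & grpset P x = grpset P y].
Proof.
move=> xy; have E := grpset_eq esym xy; split.
- rewrite /isW; case: wopt => // w; apply/idP/idP => H; first exact: grp_trans H xy.
  by apply: grp_trans H _; rewrite grp_sym.
- by rewrite /frame (rep_eq xy).
- by rewrite /t0 /B3.cnt E.
- exact: E.
Qed.

Lemma cs_ne x y : e x y -> cs x != cs y.
Proof. by move=> exy; apply: cs_proper; rewrite ?inE. Qed.

Lemma loser_edge x y : x \in C -> y \in C -> x \in K' -> ~~ isW x -> e x y ->
  f' x != f' y.
Proof.
move=> xC yC xK nW exy.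
have xy : grp P x y by apply: connect1; rewrite /rres xC yC exy.
have [Wxy Fxy Txy Gxy] := same_grp xy.
have yK : y \in K' by apply: C_K'_grp xK xy.
have nWy : ~~ isW y by rewrite -Wxy.
have yx : grp P y x by rewrite grp_sym.
have eyx : e y x by rewrite esym.
have L1 := dd_lip xC xy exy.
have L2 := dd_lip yC yx eyx.
rewrite (f'_loser xC xK nW) (f'_loser yC yK nWy) -Fxy -Txy.
have exy' := cs_ne exy.
case: ltnP => Hx; case: ltnP => Hy.
- by apply: chain_ne => //; apply: ar_idx.
- have E : dd x = (t0 x).+1 by apply: ar_eq Hy Hx L2.
  have [H0 _ _ _ _] := Hch (frame x) sw.
  rewrite E subSn // subnn /= H0 -(frame_spec xC (grp_trans xy yx)); last by rewrite (clean_dd xC).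
  by apply: Hprop.
- have E : dd y = (t0 x).+1 by apply: ar_eq Hx Hy L1.
  have [H0 _ _ _ _] := Hch (frame x) sw.
  rewrite E subSn // subnn /= H0 Fxy -(frame_spec yC (grp_trans yx xy)); last by rewrite (clean_dd yC) -Txy.
  by apply: Hprop.
- by apply: Hprop.
Qed.


Lemma S_ge2 : 2 <= S.
Proof. by rewrite /Sf leq_addl. Qed.

Lemma ar_t0 h : 0 < h -> h < S -> S - h <= S.-1.
Proof. move=> *; lia. Qed.

Lemma ar_t0L h L : L + 1 <= h -> h < S -> S - h + L <= S.-1.
Proof. move=> *; lia. Qed.

Lemma ar_t0L' h h' L : h' + L <= h -> h < S -> S - h + L <= S - h'.
Proof. move=> *; lia. Qed.

Lemma hf_pos s : 0 < hf k n s.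
Proof. by rewrite /hf addn1. Qed.

Lemma loser_far x : x \in C -> x \in K' -> ~~ isW x -> t0 x + Lc k <= S.-1 ->
  x \notin ball e (t0 x + Lc k) (grpset P x) -> f' x = (sw (cs x)).+1.
Proof.
move=> xC xK nW HS Hn; rewrite (f'_loser xC xK nW).
have Hd : t0 x + Lc k < dd x.
  apply: dset_gt Hn; last exact: dd_in xC.
  by move: HS; rewrite /N; lia.
have -> : t0 x < dd x by apply: leq_ltn_trans Hd; apply: leq_addr.
have [_ H1 _ _ _] := Hch (frame x) sw; apply: H1.
move: Hd; rewrite /Lc; lia.
Qed.

Lemma winner_sw x : isW x -> frame x = sw.
Proof.
rewrite /isW /sw; case: wopt => // w wx; rewrite /frame; by rewrite (rep_eq wx).
Qed.


Lemma loser_t0 x : x \in C -> x \in K' -> ~~ isW x ->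
  t0 x + Lc k <= S.-1 /\ t0 x + Lc k <= S - hf k n (cnt P' x).
Proof.
move=> xC xK nW.
have [H1 H2] := hf_loser (cnt_pos xC) (loser_cnt xC xK nW) (cnt'_le x).
split; [exact: ar_t0L H1 (hf_lt _) | exact: ar_t0L' H2 (hf_lt _)].
Qed.


Lemma winner_clean x : x \in C -> isW x -> clean P x -> f' x = (sw (cs x)).+1.
Proof.
move=> xC W Hc; rewrite /f'; case: ifP => _; last first.
  by rewrite (frame_spec xC (connect0 _ _) Hc) winner_sw.
by rewrite xC W (frame_spec xC (connect0 _ _) Hc) winner_sw.
Qed.


Lemma Pset_far x y : x \in C -> y \notin C -> e x y -> x \notin ball e S.-1 [set u in P].
Proof.
move=> xC yC exy; apply/negP => Hx; move: yC.
have := ball_step Hx exy; rewrite prednK; last by have := S_ge2; lia.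
by move=> ->.
Qed.


Lemma grpset_subP x : grpset P x \subset [set u in P].
Proof. by apply/subsetP => u; rewrite !inE => /andP []. Qed.


Lemma f'_border x y : x \in C -> x \in K' -> y \notin C -> e x y -> f' x = (sw (cs x)).+1.
Proof.
move=> xC xK yC exy; have Hfar := Pset_far xC yC exy.
case W: (isW x).
  apply: winner_clean => //; apply/negP => H; move/negP: Hfar; apply.
  apply: ball_mono H; last exact: grpset_subP.
  exact: ar_t0 (hf_pos _) (hf_lt _).
have nW : ~~ isW x by rewrite W.
have [L1 _] := loser_t0 xC xK nW.
apply: loser_far => //; apply/negP => H; move/negP: Hfar; apply.
by apply: ball_mono H; last exact: grpset_subP.
Qed.


Lemma perm_ne (s : {perm 'I_k}) a b : a != b -> (s a).+1 != (s b).+1.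
Proof.
by move=> ab; rewrite eqSS; apply/eqP => /val_inj/perm_inj E; move: ab; rewrite E eqxx.
Qed.


Lemma f'_prop x y : x \in C' -> y \in C' -> e x y -> f' x != f' y.
Proof.
move=> xC' yC' exy.
have xy' : grp P' x y by apply: connect1; rewrite /rres xC' yC' exy.
have yx' : grp P' y x by rewrite grp_sym.
case xK: (x \in K'); last first.
  have nxK : x \notin K' by rewrite xK.
  have nyK := notK'_grp nxK xy'.
  rewrite (f'_out nxK) (f'_out nyK); apply: Hprop => //; exact: notK'_C.
have yK : y \in K' by apply: K'_grp xK xy'.
case xC: (x \in C); case yC: (y \in C).
- have xy : grp P x y by apply: connect1; rewrite /rres xC yC exy.
  have [Wxy _ _ _] := same_grp xy.
  case W: (isW x); last by apply: loser_edge => //; rewrite W.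
  rewrite (f'_winner xC xK W) (f'_winner yC yK); [exact: Hprop | by rewrite -Wxy].
- rewrite (f'_border xC xK (negbT yC) exy) (f'_new yK (negbT yC)).
  exact: perm_ne (cs_ne exy).
- have eyx : e y x by rewrite esym.
  rewrite (f'_border yC yK (negbT xC) eyx) (f'_new xK (negbT xC)).
  exact: perm_ne (cs_ne exy).
- rewrite (f'_new xK (negbT xC)) (f'_new yK (negbT yC)).
  exact: perm_ne (cs_ne exy).
Qed.


Lemma f'_range x : x \in C' -> 0 < f' x <= k.+1.
Proof.
move=> xC'; rewrite /f'; case: ifP => xK; last first.
  by apply: Hrange; apply: notK'_C => //; rewrite xK.
case: ifP => xC; last by rewrite /= ltnS (ltnW (ltn_ord _)).
case: ifP => _; first exact: Hrange.
case: ifP => _; last exact: Hrange.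
by have [_ _ H _ _] := Hch (frame x) sw; apply: H.
Qed.


Lemma f'_P : map f' P = map f P.
Proof.
apply/eq_in_map => u uP; rewrite /f'; case: ifP => // uK.
have uC := P_C uP; rewrite uC; case: ifP => // _.
have -> // : clean P u = false.
apply/negbTE; rewrite negbK; apply/ballP; exists u; last exact: nball0.
by rewrite inE uP; exact: connect0.
Qed.


Lemma f'_frame x : x \in C' -> exists s : {perm 'I_k}, forall y, grp P' x y ->
  clean P' y -> f' y = (s (cs y)).+1.
Proof.
move=> xC'; case xK: (x \in K'); last first.
  have nxK : x \notin K' by rewrite xK.
  have xC := notK'_C xC' nxK.
  exists (frame x) => y xy; have nyK := notK'_grp nxK xy.
  rewrite (notK'_clean nyK) (f'_out nyK) => Hc.
  by have := frame_spec xC (notK'_grpP nxK xy) Hc; apply.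
exists sw => y xy Hc; have yK := K'_grp xK xy.
case yC: (y \in C); last exact: f'_new yK (negbT yC).
case W: (isW y).
  apply: winner_clean => //; apply/negP => H; move/negP: Hc; apply.
  apply: ball_mono H; last exact: grpset_sub.
  apply: leq_sub2l; apply: hf_mono; apply: cnt_le.
have nW : ~~ isW y by rewrite W.
have [L1 L2] := loser_t0 yC yK nW.
apply: loser_far => //; apply/negP => H; move/negP: Hc; apply.
by apply: ball_mono H; last exact: grpset_sub.
Qed.


Lemma step_inv (o : seq nat) : map f P = o -> Inv k l n e P' (rcons o (f' v)).
Proof.
move=> Ho; exists f'; split.
- by rewrite /P' map_rcons f'_P Ho.
- exact: f'_range.
- exact: f'_prop.
- move=> x xC'; have [s Hs] := f'_frame xC'; exists s, cs; split => //.
  by move=> a b _ _ ab; apply: cs_proper; rewrite ?inE.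
Qed.


End Step.

End B4.
Import B4.
Module B5.

Section Transport.
Variables (V U : finType) (e : rel V) (eU : rel U) (i : V -> U) (W' : {set V}).
Variables (k l n : nat).
Hypothesis k0 : 0 < k.
Hypothesis iinj : injective i.
Hypothesis HeU : forall x y, eU (i x) (i y) = [&& x \in W', y \in W' & e x y].
Hypothesis HeU2 : forall a b, eU a b -> (exists x, a = i x) /\ (exists y, b = i y).
Variable P : seq V.
Hypothesis HW : vis k l n e P \subset W'.

Lemma memi (A : {set V}) x : (i x \in i @: A) = (x \in A).
Proof. exact: mem_imset. Qed.

Lemma nball_W t u : u \in P -> t <= Tf k l n -> nball e t u \subset W'.
Proof.
move=> uP tT; apply/subsetP => y Hy; apply: (subsetP HW); apply/ballP; exists u.
  by rewrite inE.
exact: nball_mono tT Hy.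
Qed.

Lemma nball_tr t u : u \in P -> t <= Tf k l n -> nball eU t (i u) = i @: nball e t u.
Proof.
move=> uP; elim: t => [|t IH] tT.
  by rewrite /= imset_set1.
have IH' := IH (ltnW tT).
have sub := nball_W uP tT.
apply/setP => b; apply/idP/idP.
  move/nballSP => [H|[a Ha ab]].
    by move: H; rewrite IH' => /imsetP [y Hy ->]; rewrite memi nball_S.
  have [[x Ex] [y Ey]] := HeU2 ab; subst a b.
  move: Ha; rewrite IH' memi => Hx; move: ab; rewrite HeU => /and3P [_ _ exy].
  by rewrite memi; apply: nball_step Hx exy.
move/imsetP => [y Hy ->]; move/nballSP: Hy => [Hy|[x Hx exy]].
  by apply: nball_S; rewrite IH' memi.
apply: (@nball_step _ _ _ _ (i x)); first by rewrite IH' memi.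
rewrite HeU exy andbT (subsetP sub x (nball_S Hx)) (subsetP sub y (nball_step Hx exy)) //.
Qed.

Lemma ball_tr t (A : {set V}) : A \subset [set x in P] -> t <= Tf k l n ->
  ball eU t (i @: A) = i @: ball e t A.
Proof.
move=> /subsetP AP tT; apply/setP => b; apply/ballP/imsetP.
  move=> [a /imsetP [u uA ->]]; rewrite nball_tr //; last by have := AP _ uA; rewrite inE.
  move/imsetP => [y Hy ->]; exists y => //; apply/ballP; exists u.
  done. done.
move=> [y /ballP [u uA Hy] ->]; exists (i u); first by rewrite memi.
by rewrite nball_tr ?memi //; have := AP _ uA; rewrite inE.
Qed.

Lemma setP_tr : [set x in map i P] = i @: [set x in P].
Proof.
apply/setP => a; rewrite inE; apply/mapP/imsetP => [[x xP ->]|[x xP ->]]; exists x => //.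
  by rewrite inE.
by move: xP; rewrite inE.
Qed.

Lemma core_tr : core k n eU (map i P) = i @: core k n e P.
Proof. by rewrite /core setP_tr ball_tr // /Tf leq_addr. Qed.

Lemma vis_tr : vis k l n eU (map i P) = i @: vis k l n e P.
Proof. by rewrite /vis setP_tr ball_tr. Qed.

Lemma core_W : core k n e P \subset W'.
Proof.
apply: subset_trans HW; apply/subsetP => x; apply: ball_mono => //; exact: leq_addr.
Qed.

Lemma rres_tr x y : rres eU (i @: core k n e P) (i x) (i y) = rres e (core k n e P) x y.
Proof.
rewrite /rres !memi HeU; case xC: (x \in core k n e P); case yC: (y \in core k n e P) => //=.
by rewrite !(subsetP core_W).
Qed.

Lemma grp_tr1 x b : connect (rres eU (i @: core k n e P)) (i x) b ->
  exists2 y, b = i y & connect (rres e (core k n e P)) x y.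
Proof.
move/connectP => [p]; elim: p x => [|c p IH] x /=; first by move=> _ ->; exists x.
move=> /andP [xc Hp] Hb.
case/and3P: (xc) => _ _ /HeU2 [_ [y Ey]]; subst c.
have [z -> Hz] := IH y Hp Hb; exists z => //.
by apply: connect_trans (connect1 _) Hz; rewrite -rres_tr.
Qed.

Lemma grp_tr x y : grp k n eU (map i P) (i x) (i y) = grp k n e P x y.
Proof.
rewrite /grp core_tr; apply/idP/idP.
  by move/grp_tr1 => [z /iinj -> H].
move/connectP => [p]; elim: p x => [|c p IH] x /=; first by move=> _ ->; exact: connect0.
move=> /andP [xc Hp] Hy; apply: connect_trans (connect1 _) (IH c Hp Hy).
by rewrite rres_tr.
Qed.

Lemma grpset_tr y : grpset k n eU (map i P) (i y) = i @: grpset k n e P y.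
Proof.
apply/setP => a; rewrite inE; apply/andP/imsetP.
  move=> [/mapP [x xP ->]]; rewrite grp_tr => H; exists x => //; by rewrite inE xP.
move=> [x]; rewrite inE => /andP [xP H] ->; split; first exact: map_f.
by rewrite grp_tr.
Qed.

Lemma cnt_tr y : cnt k n eU (map i P) (i y) = cnt k n e P y.
Proof. by rewrite /cnt grpset_tr card_imset. Qed.

Lemma clean_tr y : clean k n eU (map i P) (i y) = clean k n e P y.
Proof.
rewrite /clean cnt_tr grpset_tr ball_tr ?memi //.
  by apply/subsetP => u; rewrite !inE => /andP [].
rewrite /Tf; apply: leq_trans (leq_subr _ _) _; exact: leq_addr.
Qed.

Definition back (a : U) : option V := [pick x | i x == a].

Lemma back_i x : back (i x) = Some x.
Proof.
rewrite /back; case: pickP => [y /eqP /iinj -> //|/(_ x)]; by rewrite eqxx.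
Qed.

Lemma Inv_tr o : Inv k l n e P o <-> Inv k l n eU (map i P) o.
Proof.
split.
- move=> [f [Hm Hr Hp Hf]].
  pose fU a := if back a is Some x then f x else 0.
  have fUi : forall x, fU (i x) = f x by move=> x; rewrite /fU back_i.
  exists fU; split.
  + by rewrite -map_comp -Hm; apply: eq_map => x /=; rewrite fUi.
  + by move=> a; rewrite core_tr => /imsetP [x xC ->]; rewrite fUi; apply: Hr.
  + move=> a b; rewrite core_tr => /imsetP [x xC ->] /imsetP [y yC ->].
    rewrite HeU => /and3P [_ _ exy]; rewrite !fUi; exact: Hp.
  + move=> a; rewrite core_tr => /imsetP [x xC ->].
    have [s [chi [Hchi Hs]]] := Hf x xC.
    pose chiU a := if back a is Some x then chi x else Ordinal k0.
    have chiUi : forall x, chiU (i x) = chi x by move=> z; rewrite /chiU back_i.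
    exists s, chiU; split.
      move=> a' b'; rewrite vis_tr => /imsetP [x' Hx' ->] /imsetP [y' Hy' ->].
      rewrite HeU => /and3P [_ _ exy]; rewrite !chiUi; exact: Hchi.
    move=> b xb; have := xb; rewrite /grp core_tr => /grp_tr1 [y -> xy].
    rewrite clean_tr fUi chiUi; exact: Hs.
- move=> [fU [Hm Hr Hp Hf]]; exists (fun x => fU (i x)); split.
  + by rewrite -Hm -map_comp.
  + by move=> x xC; apply: Hr; rewrite core_tr memi.
  + move=> x y xC yC exy; apply: Hp; rewrite ?core_tr ?memi //.
    by rewrite HeU exy !(subsetP core_W).
  + move=> x xC; have xC' : i x \in core k n eU (map i P) by rewrite core_tr memi.
    have [s [chiU [Hchi Hs]]] := Hf (i x) xC'.
    exists s, (fun x => chiU (i x)); split.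
      move=> x' y' Hx' Hy' exy; apply: Hchi; rewrite ?vis_tr ?memi //.
      by rewrite HeU exy !(subsetP HW).
    by move=> y xy Hc; apply: Hs; rewrite ?grp_tr ?clean_tr.
Qed.

End Transport.

End B5.
Import B5.
Module B6.

Definition chooser (Q : nat -> Prop) : nat := epsilon (inhabits 0) Q.

Fixpoint build (Q : nat -> seq nat -> nat -> Prop) (j : nat) : seq nat :=
  match j with
  | 0 => [::]
  | j'.+1 => let o := build Q j' in rcons o (chooser (Q j'.+1 o))
  end.

Lemma build_size Q j : size (build Q j) = j.
Proof. by elim: j => //= j IH; rewrite size_rcons IH. Qed.

Lemma build_take Q m j : j <= m -> take j (build Q m) = build Q j.
Proof.
elim: m => [|m IH]; first by rewrite leqn0 => /eqP ->.
rewrite leq_eqVlt => /orP [/eqP ->|]; first by rewrite take_oversize // build_size.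
rewrite ltnS => jm /=; rewrite -cats1 takel_cat ?build_size //; exact: IH.
Qed.

Lemma build_nth Q m j : j < m -> nth 0 (build Q m) j = last 0 (build Q j.+1).
Proof.
move=> jm; rewrite -(nth_take 0 (ltnSn j)) build_take //= nth_rcons build_size ltnn eqxx.
by rewrite last_rcons.
Qed.

Lemma build_ext Q Q' m : (forall j, j <= m -> Q j = Q' j) -> build Q m = build Q' m.
Proof.
elim: m => //= m IH H; rewrite IH => [|j jm]; last by apply: H; apply: leqW.
by rewrite H.
Qed.

Section Alg.
Variables (k l d : nat).

Definition Alg : online_alg := fun n s vis adj =>
  let eU : rel 'I_(n ^ d).+1 := fun a b => adj a b in
  let PU := map (fun a => inord a : 'I_(n ^ d).+1) s in
  last 0 (build (fun j o c => Inv k l n eU (take j PU) (rcons o c)) (size s)).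

End Alg.

Section Main.
Variables (k l d : nat).
Hypothesis k2 : 2 <= k.
Variables (V : finType) (e : rel V) (id : V -> nat) (sigma : seq V).
Hypothesis esym : symmetric e.
Hypothesis idinj : injective id.
Hypothesis idb : forall x, 1 <= id x <= #|V| ^ d.
Let n := #|V|.
Let iota x : 'I_(n ^ d).+1 := inord (id x).

Lemma iota_val x : (iota x : nat) = id x.
Proof. by rewrite /iota inordK // ltnS; case/andP: (idb x). Qed.

Lemma iota_inj : injective iota.
Proof. by move=> x y E; apply: idinj; rewrite -!iota_val E. Qed.

Definition QV j o c := Inv k l n e (take j sigma) (rcons o c).

Lemma out_eq i : i <= size sigma ->
  online_output (Alg k l d) (Tf k l) e id sigma i = last 0 (build QV i).
Proof.
move=> isz; rewrite /online_output /Alg size_map size_take.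
have -> : (if i < size sigma then i else size sigma) = i.
  by case: ltnP => // H; apply/eqP; rewrite eqn_leq isz H.
congr last; apply: build_ext => j ji.
apply: functional_extensionality => o; apply: functional_extensionality => c.
apply: propositional_extensionality.
set W := ball e (Tf k l n) [set x in take i sigma].
set eU := fun a b : 'I_(n ^ d).+1 => _.
have E : take j (map (fun a => inord a : 'I_(n ^ d).+1) (map id (take i sigma)))
   = map iota (take j sigma).
  by rewrite -map_comp -map_take take_takel.
rewrite E; symmetry; apply: (Inv_tr (W' := W)).
- by apply: leq_trans k2.
- exact: iota_inj.
- move=> x y; rewrite /eU !iota_val; apply/existsP/idP.
    move=> [x' /andP [x'W /existsP [y' /andP [y'W /and3P [/eqP /idinj E1 /eqP /idinj E2 exy]]]]].
    by subst; rewrite x'W y'W exy.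
  move=> /and3P [xW yW exy]; exists x; rewrite xW /=; apply/existsP; exists y.
  by rewrite yW !eqxx exy.
- move=> a b; rewrite /eU => /existsP [x /andP [xW /existsP [y /andP [yW /and3P [/eqP Ex /eqP Ey _]]]]].
  by split; [exists x | exists y]; apply: ord_inj; rewrite iota_val ?Ex ?Ey.
- apply/subsetP => x; apply: ball_mono => //; apply/subsetP => u; rewrite !inE.
  by move=> H; rewrite -(cat_take_drop j (take i sigma)) mem_cat take_takel // H.
Qed.


Hypothesis Lcl : L_class e k l.
Hypothesis Hs : perm_eq sigma (enum V).

Lemma sig_uniq : uniq sigma.
Proof. by rewrite (perm_uniq Hs) enum_uniq. Qed.

Lemma inv0 : Inv k l n e [::] [::].
Proof.
exists (fun _ => 0); split => //.
- by move=> x /ballP [u]; rewrite inE.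
- by move=> x y /ballP [u]; rewrite inE.
- by move=> x /ballP [u]; rewrite inE.
Qed.

Lemma inv_build j : j <= size sigma -> Inv k l n e (take j sigma) (build QV j).
Proof.
elim: j => [|j IH] Hj; first by rewrite take0; exact: inv0.
have jlt : j < size sigma by [].
have [f [Hm Hr Hp Hf]] := IH (ltnW Hj).
case: Lcl => [[cs csp] Luniq].
pose ch := fun s0 s1 : {perm 'I_k} =>
  epsilon (inhabits (fun (_ : nat) (_ : 'I_k) => 0)) (fun F => valid_chain F s0 s1 (3 * k)).
have Hch : forall s0 s1, valid_chain (ch s0 s1) s0 s1 (3 * k).
  move=> s0 s1; rewrite /ch; apply: (epsilon_spec _ (fun F => valid_chain F s0 s1 (3 * k))); exact: chain_exists.
pose sig := fun x => epsilon (inhabits (1%g : {perm 'I_k}))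
  (fun s => forall y, grp k n e (take j sigma) x y -> clean k n e (take j sigma) y ->
     f y = (s (cs y)).+1).
have Hsig : forall x, x \in core k n e (take j sigma) -> forall y,
   grp k n e (take j sigma) x y -> clean k n e (take j sigma) y -> f y = (sig x (cs y)).+1.
  move=> x xC.
  exact: (epsilon_spec (inhabits (1%g : {perm 'I_k})) (fun s => forall y, grp k n e (take j sigma) x y -> clean k n e (take j sigma) y ->
     f y = (s (cs y)).+1) (strong_frame esym csp Luniq xC (Hf x xC))).
case Es: sigma jlt => [|x0 s'] // jlt'.
have Ht := take_nth x0 jlt'.
have vP : nth x0 (x0 :: s') j \notin take j (x0 :: s').
  have U := sig_uniq; rewrite Es in U.
  move: U; rewrite -{1}(cat_take_drop j.+1 (x0 :: s')) Ht cat_uniq rcons_uniq.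
  by case/andP => /andP [].
have Pu : uniq (take j (x0 :: s')).
  have U := sig_uniq; rewrite Es in U.
  move: U; rewrite -{1}(cat_take_drop j (x0 :: s')) cat_uniq; by case/andP.
rewrite Es in Hm Hr Hp Hsig.
have := step_inv l esym csp Hch vP Pu Hr Hp Hsig Hm; rewrite -Ht => Hinv.
suff H : QV j.+1 (build QV j) (chooser (QV j.+1 (build QV j))).
  by move: H; rewrite {1}/QV [in take _ sigma]Es.
apply: epsilon_spec.
exists (f' e cs ch (take j (x0 :: s')) (nth x0 (x0 :: s') j) f sig (nth x0 (x0 :: s') j)).
change (Inv k l n e (take j.+1 sigma) (rcons (build QV j)
  (f' e cs ch (take j (x0 :: s')) (nth x0 (x0 :: s') j) f sig (nth x0 (x0 :: s') j)))).
rewrite [in take _ sigma]Es; exact: Hinv.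
Qed.

Lemma main_props :
  (forall v, 1 <= online_coloring (Alg k l d) (Tf k l) e id sigma v <= k.+1) /\
  (forall u v, e u v -> online_coloring (Alg k l d) (Tf k l) e id sigma u !=
                        online_coloring (Alg k l d) (Tf k l) e id sigma v).
Proof.
have := inv_build (leqnn _); rewrite take_size => [[f [Hm Hr Hp _]]].
have inS : forall v, v \in sigma by move=> v; rewrite (perm_mem Hs) mem_enum.
have col : forall v, online_coloring (Alg k l d) (Tf k l) e id sigma v = f v.
  move=> v; have iv : index v sigma < size sigma by rewrite index_mem.
  rewrite /online_coloring out_eq // -(build_nth QV iv) -Hm (nth_map v) // nth_index //.
have inC : forall v, v \in core k n e sigma.
  by move=> v; apply: (subsetP (ball_sub _ _ _)); rewrite inE.
split=> [v|u v euv]; rewrite !col; [exact: Hr | exact: Hp].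
Qed.

End Main.

End B6.
Import B6.

Theorem theorem4 :
  forall k l : nat, 2 <= k ->
  forall d : nat,
  exists (T : nat -> nat) (A : online_alg),
    is_O_log T /\ solves_online A T k l d.
Proof.
move=> k l k2 d; exists (Tf k l), (Alg k l d); split.
- exists (3 * k + 2 + l), 2 => n n2.
  have L1 : 1 <= trunc_log 2 n.
    by have := leq_trunc_log 2 n2; rewrite (trunc_log_eq (p:=2) (n:=1)).
  rewrite /Tf /Sf /Lc /lg; set L := trunc_log 2 n in L1 *; nia.
- move=> V e id sigma [esym _] _ Lcl idinj idb Hs.
  exact: main_props.
Qed.
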